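(* Define the formal power series $z_1(g,\mathfrak{g})=\sum_{T} g^{e(T)}\,\mathfrak{g}^{m(T)}$, where the sum runs over all rooted plane trees $T$ (including the single-vertex tree) each of whose edges carries a mark from $\{+,0,-\}$, $e(T)$ is the number of edges, and $m(T)$ is the number of non-root vertices that are local maxima of the induced vertex labeling. Then $z_1$ is the unique formal power series in $g$ (with coefficients polynomial in $\mathfrak{g}$) with constant term $1$ satisfying $$3g^2 z_1^4-4g z_1^3+\big(1+2g(1-2\mathfrak{g})\big)z_1^2-1=0.$$ In particular $z_1=\frac{1-\sqrt{1-12g}}{6g}$ for $\mathfrak{g}=1$ and $z_1=\frac{1-\sqrt{1-4g}}{2g}$ for $\mathfrak{g}=0$.
   Context: A rooted plane tree is a finite tree embedded in the plane with a distinguished root vertex (and root corner); edges are oriented away from the root. Given marks in $\{+,0,-\}$ on the edges, the induced vertex labeling assigns label $0$ to the root and increases the label by $+1$, $0$, $-1$ respectively along an edge marked $+$, $0$, $-$ in the direction away from the root. A vertex is a local maximum if its label is greater than or equal to the labels of all its neighbours in the tree. (Via the Cori–Vauquelin–Schaeffer bijection these trees encode rooted pointed quadrangulations with $e(T)$ faces, and the non-root local maxima of the tree correspond to local maxima of the distance labeling.) *)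

(* Defs.v *)
From Stdlib Require List.
From HB Require Import structures.
From mathcomp Require Import all_boot all_order all_algebra.
Set Implicit Arguments. Unset Strict Implicit. Unset Printing Implicit Defensive.
Import Order.TTheory GRing.Theory Num.Theory.
Local Open Scope ring_scope.

Inductive mark := MPlus | MZero | MMinus.

Definition mark_delta (m : mark) : int :=
  match m with MPlus => 1 | MZero => 0 | MMinus => -1 end.

(* A rooted plane tree with marked edges: a vertex is given by the ordered
   list of its children, each child carrying the mark of the edge
   from the vertex (towards the root side) to that child. *)
Inductive mtree := MNode : seq (mark * mtree) -> mtree.

Fixpoint edges (t : mtree) : nat :=
  let: MNode cs := t in
  (fix go (cs : seq (mark * mtree)) : nat :=
     match cs with
     | [::] => 0%N
     | (_, c) :: cs' => (1 + edges c + go cs')%N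
     end) cs.

(* Number of vertices of the subtree rooted at t that are local maxima of
   the labeling, where t has label l and its parent has label lp. *)
Fixpoint lmax_sub (t : mtree) (lp l : int) {struct t} : nat :=
  let: MNode cs := t in
  addn (nat_of_bool ((lp <= l) && all (fun c => l + mark_delta c.1 <= l) cs))
   ((fix go (cs : seq (mark * mtree)) : nat :=
        match cs with
        | [::] => 0%N
        | (mk, c) :: cs' => (lmax_sub c l (l + mark_delta mk) + go cs')%N
        end) cs).

Definition locmax (t : mtree) : nat :=
  let: MNode cs := t in
  sumn [seq lmax_sub c.2 0 (mark_delta c.1) | c <- cs].

(* Formal power series in g with coefficients in Z[frak g] (frak g = 'X):
   a series is its coefficient sequence. *)
Definition series := nat -> {poly int}.

Definition sconst (p : {poly int}) : series :=
  fun n => if n is 0%N then p else 0.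
Definition sg : series := fun n => if n == 1%N then 1 else 0.
Definition sadd (a b : series) : series := fun n => a n + b n.
Definition ssub (a b : series) : series := fun n => a n - b n.
Definition smul (a b : series) : series :=
  fun n => \sum_(i < n.+1) a i * b (n - i)%N.
Definition spow (a : series) (k : nat) : series := iter k (smul a) (sconst 1).

Definition z1_equation (z : series) : Prop :=
  forall n,
    ssub (sadd (ssub (smul (sconst 3) (smul (spow sg 2) (spow z 4)))
                     (smul (sconst 4) (smul sg (spow z 3))))
               (smul (sadd (sconst 1)
                           (smul (sconst 2) (smul sg (sconst (1 - 2 *: 'X)))))
                     (spow z 2)))
         (sconst 1) n = 0.

(* c is the coefficient sequence of z1 = sum_T g^e(T) frakg^m(T):
   for every n, the set of marked trees with n edges is enumerated without
   repetition by some list s, and c n = sum_{T in s} frakg^m(T). *)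
Definition is_z1 (c : series) : Prop :=
  forall n : nat, exists s : seq mtree,
    List.NoDup s /\ (forall T, List.In T s <-> edges T = n) /\
    c n = \sum_(T <- s) 'X^(locmax T).

Definition catalan (n : nat) : nat := ('C(n.*2, n) %/ n.+1)%N.

(* Main.v *)
Require Import Defs.
From HB Require Import structures.
From mathcomp Require Import all_boot all_order all_algebra.
From mathcomp Require Import zify ring.
From Stdlib Require Import FunctionalExtensionality.
Import Order.TTheory GRing.Theory Num.Theory.
Local Open Scope ring_scope.
Set Implicit Arguments. Unset Strict Implicit.

Definition mark_eqb (m m' : mark) : bool :=
  match m, m' with
  | MPlus, MPlus | MZero, MZero | MMinus, MMinus => true
  | _, _ => false end.
Lemma mark_eqP : Equality.axiom mark_eqb.
Proof. by case; case; constructor. Qed.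
HB.instance Definition _ := hasDecEq.Build mark mark_eqP.

Definition forest := seq (mark * mtree).

Fixpoint mtree_rect' (P : mtree -> Type) (Q : forest -> Type)
  (H0 : Q [::]) (Hc : forall m t f, P t -> Q f -> Q ((m, t) :: f))
  (Hn : forall f, Q f -> P (MNode f)) (t : mtree) : P t :=
  match t with MNode f => Hn f ((fix go (f : forest) : Q f :=
     match f with [::] => H0 | (m, t') :: f' => Hc m t' f' (mtree_rect' H0 Hc Hn t') (go f') end) f)
  end.

Fixpoint mtree_eqb (t u : mtree) : bool :=
  match t, u with MNode cs, MNode ds =>
   (fix go (cs ds : forest) : bool := match cs, ds with
     | [::], [::] => true
     | (m, c) :: cs', (m', d) :: ds' => (m == m') && mtree_eqb c d && go cs' ds'
     | _, _ => false end) cs ds end.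

Lemma mtree_eqP : Equality.axiom mtree_eqb.
Proof.
apply: (@mtree_rect' (fun t => forall u, reflect (t = u) (mtree_eqb t u))
   (fun f => forall g, reflect (f = g) (mtree_eqb (MNode f) (MNode g)))).
- by case=> [|[m d] g]; constructor.
- move=> m t f IHt IHf [|[m' d] g]; first by constructor.
  change (reflect ((m,t)::f = (m',d)::g) ((m == m') && mtree_eqb t d && mtree_eqb (MNode f) (MNode g))).
  case: eqP => [<-|]; last by move=> ne; constructor; case.
  case: IHt => [<-|]; last by move=> ne; constructor; case.
  case: (IHf g) => [<-|ne]; first by constructor.
  by constructor; case=> e; apply: ne; rewrite e.
- move=> f IHf [g]; case: (IHf g) => [->|ne]; constructor => //.
  by case.
Qed.
HB.instance Definition _ := hasDecEq.Build mtree mtree_eqP.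

Definition notplus (m : mark) : bool := if m is MPlus then false else true.
Definition notminus (m : mark) : bool := if m is MMinus then false else true.

Fixpoint lm (b : bool) (t : mtree) : nat :=
  let: MNode cs := t in
  addn (b && all (fun c => notplus c.1) cs)
   ((fix go (cs : forest) : nat := match cs with
      | [::] => 0%N
      | (mk, c) :: cs' => (lm (notminus mk) c + go cs')%N end) cs).

Lemma lm_nil b : lm b (MNode [::]) = b.
Proof. by case: b. Qed.
Lemma lm_cons m t f : lm false (MNode ((m, t) :: f)) = (lm (notminus m) t + lm false (MNode f))%N.
Proof. by []. Qed.
Lemma lm_true f : lm true (MNode f) = (all (fun c => notplus c.1) f + lm false (MNode f))%N.
Proof. by []. Qed.
Lemma edges_nil : edges (MNode [::]) = 0%N. Proof. by []. Qed.
Lemma edges_cons m t f : edges (MNode ((m, t) :: f)) = (1 + edges t + edges (MNode f))%N.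
Proof. by []. Qed.

Lemma le_delta (l : int) m : (l + mark_delta m <= l) = notplus m.
Proof. by case: m => /=; lia. Qed.
Lemma ge_delta (l : int) m : (l <= l + mark_delta m) = notminus m.
Proof. by case: m => /=; lia. Qed.

Lemma lmax_lm t : forall lp l, lmax_sub t lp l = lm (lp <= l) t.
Proof.
move: t; apply: (@mtree_rect' (fun t => forall lp l, lmax_sub t lp l = lm (lp <= l) t)
   (fun f => forall l, (fix go (cs : seq (mark * mtree)) : nat :=
        match cs with
        | [::] => 0%N
        | (mk, c) :: cs' => (lmax_sub c l (l + mark_delta mk) + go cs')%N
        end) f = lm false (MNode f)
     /\ all (fun c => l + mark_delta c.1 <= l) f = all (fun c => notplus c.1) f)).
- by [].
- move=> m t f IHt IHf l; have [h1 h2] := IHf l; rewrite /= IHt ge_delta le_delta h2.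
  by split=> //; rewrite h1 /= add0n.
- move=> f IHf lp l; have [h1 h2] := IHf l.
  by rewrite /= h1 h2 /= add0n.
Qed.

Lemma locmax_lm t : locmax t = lm false t.
Proof.
case: t => f; rewrite /locmax; elim: f => [|[m t] f IH] //=.
rewrite IH lmax_lm add0n; congr (lm _ _ + _)%N; by case: m.
Qed.

Definition marks := [:: MPlus; MZero; MMinus].
Definition fedges (f : forest) := edges (MNode f).

Fixpoint enumF (fuel n : nat) : seq forest :=
  match fuel with
  | 0 => if n is 0 then [:: [::]] else [::]
  | fuel'.+1 => match n with
      | 0 => [:: [::]]
      | n'.+1 => flatten [seq flatten [seq flatten [seq [seq (m, MNode t) :: f
                    | f <- enumF fuel' (n' - k)] | t <- enumF fuel' k] | m <- marks]
                    | k <- iota 0 n'.+1]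
      end
  end.

Lemma fedges_cons m t f : fedges ((m, MNode t) :: f) = (fedges t + fedges f).+1.
Proof. by rewrite /fedges edges_cons add1n. Qed.

Lemma fedges_eq0 f : (fedges f == 0%N) = (f == [::]).
Proof. by case: f => [|[m [t]] f] //; rewrite fedges_cons. Qed.

Lemma mem_enumF fuel : forall n f, (n <= fuel)%N -> (f \in enumF fuel n) = (fedges f == n).
Proof.
elim: fuel => [|fuel IH] n f.
  by rewrite leqn0 => /eqP->; rewrite inE -fedges_eq0.
case: n => [|n] Hn; first by rewrite inE -fedges_eq0.
have Hn' : (n <= fuel)%N by [].
apply/idP/idP.
- move=> /flatten_mapP[k]; rewrite mem_iota add0n ltnS => Hk.
  move=> /flatten_mapP[m _] /flatten_mapP[t] Ht /mapP[f' Hf' ->].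
  rewrite IH in Ht; last by apply: leq_trans Hk Hn'.
  rewrite IH in Hf'; last by apply: leq_trans (leq_subr _ _) Hn'.
  rewrite fedges_cons (eqP Ht) (eqP Hf') eqSS; apply/eqP; lia.
- case: f => [|[m [t]] f] //.
  rewrite fedges_cons eqSS => /eqP He.
  apply/flatten_mapP; exists (fedges t); first by rewrite mem_iota add0n ltnS -He leq_addr.
  apply/flatten_mapP; exists m; first by case: m.
  apply/flatten_mapP; exists t.
    by rewrite IH ?eqxx //; apply: leq_trans Hn'; rewrite -He leq_addr.
  apply/mapP; exists f => //.
  by rewrite IH; [apply/eqP; lia | apply: leq_trans (leq_subr _ _) Hn'].
Qed.

Lemma uniq_flatten_map (S R : eqType) (s : seq S) (t : S -> seq R) :
  uniq s -> (forall x, x \in s -> uniq (t x)) ->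
  (forall x y z, x \in s -> y \in s -> z \in t x -> z \in t y -> x = y) ->
  uniq (flatten (map t s)).
Proof.
elim: s => [|a s IH] //= /andP[Has Us] Ut Hd.
rewrite cat_uniq Ut ?mem_head //= IH //; last 2 first.
- by move=> x Hx; apply: Ut; rewrite inE Hx orbT.
- by move=> x y z Hx Hy; apply: Hd; rewrite inE ?Hx ?Hy orbT.
rewrite andbT; apply/hasP => -[z /flatten_mapP[y Hy Hzy] Hza].
have := Hd a y z (mem_head _ _); rewrite inE Hy orbT => /(_ isT Hza Hzy) Eay.
by move: Has; rewrite Eay Hy.
Qed.

Lemma uniq_enumF fuel : forall n, (n <= fuel)%N -> uniq (enumF fuel n).
Proof.
elim: fuel => [|fuel IH] n.
  by rewrite leqn0 => /eqP->.
case: n => [|n] Hn //.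
have Hn' : (n <= fuel)%N by [].
apply: uniq_flatten_map; first exact: iota_uniq.
- move=> k; rewrite mem_iota add0n ltnS => Hk.
  apply: uniq_flatten_map => //.
  + move=> m _; apply: uniq_flatten_map.
    * by apply: IH; apply: leq_trans Hk Hn'.
    * move=> t _; rewrite map_inj_uniq; first by apply: IH; apply: leq_trans (leq_subr _ _) Hn'.
      by move=> f1 f2 [].
    * by move=> t1 t2 z _ _ /mapP[f1 _ ->] /mapP[f2 _ []].
  + by move=> m1 m2 z _ _ /flatten_mapP[t1 _ /mapP[f1 _ ->]] /flatten_mapP[t2 _ /mapP[f2 _ []]].
- move=> k1 k2 z; rewrite !mem_iota !add0n !ltnS => Hk1 Hk2.
  move=> /flatten_mapP[m1 _ /flatten_mapP[t1 Ht1 /mapP[f1 _ ->]]].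
  move=> /flatten_mapP[m2 _ /flatten_mapP[t2 Ht2 /mapP[f2 _ [_ Et _]]]].
  rewrite mem_enumF in Ht1; last by apply: leq_trans Hk1 Hn'.
  rewrite mem_enumF in Ht2; last by apply: leq_trans Hk2 Hn'.
  by rewrite -(eqP Ht1) -(eqP Ht2) Et.
Qed.

Lemma enumF_S fuel n : enumF fuel.+1 n.+1 =
  flatten [seq flatten [seq flatten [seq [seq (m, MNode t) :: f
                    | f <- enumF fuel (n - k)] | t <- enumF fuel k] | m <- marks]
                    | k <- iota 0 n.+1].
Proof. by []. Qed.

Section Sums.
Variable (R : zmodType).

Lemma sum_enumF_S fuel n (F : forest -> R) :
  \sum_(f <- enumF fuel.+1 n.+1) F f =
  \sum_(k <- iota 0 n.+1) \sum_(m <- marks) \sum_(t <- enumF fuel k)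
     \sum_(f <- enumF fuel (n - k)) F ((m, MNode t) :: f).
Proof.
rewrite enumF_S big_flatten big_map; apply: eq_bigr => k _.
rewrite big_flatten big_map; apply: eq_bigr => m _.
rewrite big_flatten big_map; apply: eq_bigr => t _.
by rewrite big_map.
Qed.

Lemma sum_enumF_fuel fuel fuel' n (F : forest -> R) :
  (n <= fuel)%N -> (n <= fuel')%N ->
  \sum_(f <- enumF fuel n) F f = \sum_(f <- enumF fuel' n) F f.
Proof.
move=> H1 H2; apply: perm_big; apply: uniq_perm; rewrite ?uniq_enumF //.
by move=> f; rewrite !mem_enumF.
Qed.
End Sums.

Definition PR := {poly int}.
Definition wB (f : forest) : PR := 'X^(lm false (MNode f)).
Definition wA (f : forest) : PR := 'X^(lm true (MNode f)).
Definition allnp (f : forest) : bool := all (fun c => notplus c.1) f.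
Definition wD (f : forest) : PR := (allnp f)%:R * 'X^(lm false (MNode f)).
Definition Bs (n : nat) : PR := \sum_(f <- enumF n n) wB f.
Definition As (n : nat) : PR := \sum_(f <- enumF n n) wA f.
Definition Ds (n : nat) : PR := \sum_(f <- enumF n n) wD f.

Lemma wA_eq f : wA f = wB f + ('X - 1) * wD f.
Proof.
rewrite /wA /wB /wD lm_true -/(allnp f); case: (allnp f) => /=.
  by rewrite exprD expr1 mul1r; ring.
by rewrite mul0r mulr0 addr0 add0n.
Qed.

Lemma As_eq n : As n = Bs n + ('X - 1) * Ds n.
Proof.
rewrite /As /Bs /Ds mulr_sumr -big_split /=; apply: eq_bigr => f _; exact: wA_eq.
Qed.

Lemma Bs0 : Bs 0 = 1.
Proof. by rewrite /Bs /= big_cons big_nil addr0 /wB lm_nil expr0. Qed.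
Lemma Ds0 : Ds 0 = 1.
Proof. by rewrite /Ds /= big_cons big_nil addr0 /wD lm_nil expr0 mulr1. Qed.

Lemma sum_rec (W : forest -> PR) (c : mark -> mtree -> PR) n :
  (forall m t f, W ((m, MNode t) :: f) = c m (MNode t) * W f) ->
  \sum_(f <- enumF n.+1 n.+1) W f =
  \sum_(k < n.+1) (\sum_(m <- marks) \sum_(t <- enumF k k) c m (MNode t)) *
                  \sum_(f <- enumF (n - k) (n - k)) W f.
Proof.
move=> HW; rewrite sum_enumF_S.
have -> : iota 0 n.+1 = index_iota 0 n.+1 by rewrite /index_iota subn0.
rewrite big_mkord; apply: eq_bigr => [[k Hk]] _ /=.
rewrite mulr_suml; apply: eq_bigr => m _.
rewrite (@sum_enumF_fuel _ n k k) //.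
rewrite mulr_suml; apply: eq_bigr => t _.
rewrite (@sum_enumF_fuel _ n (n - k) (n - k)) ?leq_subr //.
rewrite mulr_sumr; apply: eq_bigr => f _; exact: HW.
Qed.

Lemma BsS n : Bs n.+1 = \sum_(k < n.+1) (As k *+ 2 + Bs k) * Bs (n - k).
Proof.
rewrite /Bs (@sum_rec wB (fun m t => 'X^(lm (notminus m) t))); last first.
  by move=> m t f; rewrite /wB lm_cons exprD.
apply: eq_bigr => k _; congr (_ * _).
by rewrite !big_cons big_nil /= addr0 addrA mulr2n.
Qed.

Lemma DsS n : Ds n.+1 = \sum_(k < n.+1) (As k + Bs k) * Ds (n - k).
Proof.
rewrite /Ds (@sum_rec wD (fun m t => (notplus m)%:R * 'X^(lm (notminus m) t))); last first.
  by move=> m t f; rewrite /wD lm_cons exprD /allnp /=; case: (notplus m) => /=; rewrite ?mul0r ?mul1r // mulrCA.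
apply: eq_bigr => k _; congr (_ * _).
rewrite !big_cons big_nil /= addr0.
rewrite big1 ?add0r; last by move=> t _; rewrite mul0r.
by congr (_ + _); apply: eq_bigr => t _; rewrite mul1r.
Qed.

Section Trunc.
Variable R : comNzRingType.
Implicit Types (p q : {poly R}) (a b : nat -> R).

Definition trunc N a : {poly R} := \poly_(i < N.+1) a i.
Definition vanish N p := forall n, (n <= N)%N -> p`_n = 0.

Lemma coef_trunc N a n : (n <= N)%N -> (trunc N a)`_n = a n.
Proof. by move=> H; rewrite coef_poly ltnS H. Qed.

Lemma vanishMl N p q : vanish N p -> vanish N (p * q).
Proof.
move=> H n Hn; rewrite coefM big1 // => i _; rewrite H ?mul0r //.
by apply: leq_trans Hn; rewrite -ltnS.
Qed.
Lemma vanishMr N p q : vanish N q -> vanish N (p * q).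
Proof. by rewrite mulrC; apply: vanishMl. Qed.
Lemma vanishD N p q : vanish N p -> vanish N q -> vanish N (p + q).
Proof. by move=> Hp Hq n Hn; rewrite coefD Hp ?Hq ?addr0. Qed.
Lemma vanish_eq N p q : p = q -> vanish N q -> vanish N p.
Proof. by move->. Qed.

Lemma vanish_conv N (s u v : nat -> R) :
  s 0%N = 1 -> (forall n, s n.+1 = \sum_(k < n.+1) u k * v (n - k)%N) ->
  vanish N (trunc N s - 1 - 'X * (trunc N u * trunc N v)).
Proof.
move=> H0 HS [|n] Hn; rewrite !coefB coefXM coef1 /=.
  by rewrite coef_trunc // H0 subrr subr0.
rewrite subr0 coef_trunc // HS coefM; apply/eqP; rewrite subr_eq0; apply/eqP; apply: eq_bigr => [[i Hi]] _ /=.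
rewrite !coef_trunc //; first by apply: leq_trans (leq_subr _ _) (ltnW Hn).
by apply: leq_trans (ltnW Hn); rewrite -ltnS.
Qed.

Definition Qg (c z : {poly R}) : {poly R} :=
  3 * ('X ^+ 2 * z ^+ 4) - 4 * ('X * z ^+ 3) + (1 + 2 * ('X * c)) * z ^+ 2 - 1.

Lemma quartic_id (g B D X c : {poly R}) : c = 1 - 2 * X ->
  let A := B + (X - 1) * D in
  let e1 := B - 1 - g * ((A *+ 2 + B) * B) in
  let eD := D - 1 - g * ((A + B) * D) in
  3 * (g ^+ 2 * B ^+ 4) - 4 * (g * B ^+ 3) + (1 + 2 * (g * c)) * B ^+ 2 - 1 =
  e1 * (2 * (1 - g * (A + B)) * B - e1 - 2 * g * B * (A - B)) + 4 * g * B ^+ 2 * (X - 1) * eD.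
Proof. move=> -> A e1 eD; rewrite /e1 /eD /A; ring. Qed.

Lemma vanish_quartic N (a b d : nat -> R) (x : R) :
  b 0%N = 1 -> d 0%N = 1 -> (forall n, a n = b n + (x - 1) * d n) ->
  (forall n, b n.+1 = \sum_(k < n.+1) (a k *+ 2 + b k) * b (n - k)%N) ->
  (forall n, d n.+1 = \sum_(k < n.+1) (a k + b k) * d (n - k)%N) ->
  vanish N (Qg ((1 - 2 * x)%:P) (trunc N b)).
Proof.
move=> b0 d0 Ha Hb Hd.
have eA : trunc N a = trunc N b + (x%:P - 1) * trunc N d.
  apply/polyP => i; rewrite coefD mulrBl mul1r coefB coefCM !coef_poly.
  by case: ifP => _; [rewrite Ha; ring | rewrite mulr0 subrr addr0].
have h1 := vanish_conv (N:=N) (u := fun k => a k *+ 2 + b k) b0 Hb.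
have h2 := vanish_conv (N:=N) (u := fun k => a k + b k) d0 Hd.
have tD : trunc N (fun k => a k *+ 2 + b k) = trunc N a *+ 2 + trunc N b.
  by apply/polyP => i; rewrite coefD coefMn !coef_poly; case: ifP => //; rewrite mul0rn addr0.
have tA : trunc N (fun k => a k + b k) = trunc N a + trunc N b.
  by apply/polyP => i; rewrite coefD !coef_poly; case: ifP => //; rewrite addr0.
rewrite tD eA in h1; rewrite tA eA in h2.
apply: vanish_eq; first apply: (@quartic_id 'X (trunc N b) (trunc N d) x%:P).
  by rewrite polyCB polyCM polyC1 polyC_natr.
apply: vanishD; first exact: vanishMl.
by apply: vanishMr.
Qed.

End Trunc.

Definition agree N (s : series) (p : {poly PR}) := forall n, (n <= N)%N -> s n = p`_n.

Lemma agree_trunc N s : agree N s (trunc N s).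
Proof. by move=> n Hn; rewrite coef_trunc. Qed.
Lemma agree_const N q : agree N (sconst q) q%:P.
Proof. by move=> [|n] _; rewrite coefC. Qed.
Lemma agree_g N : agree N sg 'X.
Proof. by move=> n _; rewrite coefX /sg; case: eqP. Qed.
Lemma agree_add N a b p q : agree N a p -> agree N b q -> agree N (sadd a b) (p + q).
Proof. by move=> Ha Hb n Hn; rewrite coefD /sadd Ha ?Hb. Qed.
Lemma agree_sub N a b p q : agree N a p -> agree N b q -> agree N (ssub a b) (p - q).
Proof. by move=> Ha Hb n Hn; rewrite coefB /ssub Ha ?Hb. Qed.
Lemma agree_mul N a b p q : agree N a p -> agree N b q -> agree N (smul a b) (p * q).
Proof.
move=> Ha Hb n Hn; rewrite coefM /smul; apply: eq_bigr => [[i Hi]] _ /=.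
rewrite Ha ?Hb //; first by apply: leq_trans (leq_subr _ _) Hn.
by apply: leq_trans Hn; rewrite -ltnS.
Qed.
Lemma agree_pow N a p k : agree N a p -> agree N (spow a k) (p ^+ k).
Proof.
move=> Ha; elim: k => [|k IH]; first by rewrite expr0 -polyC1; apply: agree_const.
by rewrite exprS; apply: agree_mul.
Qed.

Arguments agree_trunc N s : clear implicits.
Arguments agree_const N q : clear implicits.
Arguments agree_g N : clear implicits.
Arguments agree_pow {N a p} k.

Lemma scale2X : (1 - 2 *: 'X : PR) = 1 - 2 * 'X.
Proof. by rewrite scaler_nat mulr_natl. Qed.

Lemma agree_eq (z : series) N :
  agree N (fun n => ssub (sadd (ssub (smul (sconst 3) (smul (spow sg 2) (spow z 4)))
                     (smul (sconst 4) (smul sg (spow z 3))))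
               (smul (sadd (sconst 1)
                           (smul (sconst 2) (smul sg (sconst (1 - 2 *: 'X)))))
                     (spow z 2)))
         (sconst 1) n) (Qg ((1 - 2 * 'X)%:P) (trunc N z)).
Proof.
have Hz := agree_trunc N z.

have := agree_sub (agree_add (agree_sub (agree_mul (agree_const N 3)
   (agree_mul (agree_pow 2 (agree_g N)) (agree_pow 4 Hz)))
   (agree_mul (agree_const N 4) (agree_mul (agree_g N) (agree_pow 3 Hz))))
   (agree_mul (agree_add (agree_const N 1) (agree_mul (agree_const N 2)
       (agree_mul (agree_g N) (agree_const N (1 - 2 *: 'X))))) (agree_pow 2 Hz)))
   (agree_const N 1).
by rewrite /Qg !polyC_natr polyC1 scale2X.
Qed.

Lemma InE (T : eqType) (x : T) (s : seq T) : List.In x s <-> x \in s.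
Proof.
elim: s => [|y s IH] //=; rewrite inE; split.
  by case=> [->|/IH->]; rewrite ?eqxx ?orbT.
by case/orP => [/eqP->|/IH]; [left | right].
Qed.

Lemma NoDupE (T : eqType) (s : seq T) : List.NoDup s <-> uniq s.
Proof.
elim: s => [|y s IH] /=; first by split => // _; constructor.
split.
  move=> H; inversion H; subst; apply/andP; split; last by apply/IH.
  by apply/negP => /InE.
case/andP => Hy Hs; constructor; last by apply/IH.
by move/InE; apply/negP.
Qed.

Lemma MNode_inj : injective MNode. Proof. by move=> f g []. Qed.

Lemma mem_trees n T : (T \in map MNode (enumF n n)) = (edges T == n).
Proof. by case: T => f; rewrite mem_map ?mem_enumF //; apply: MNode_inj. Qed.

Lemma is_z1_Bs : is_z1 Bs.
Proof.
move=> n; exists (map MNode (enumF n n)); split.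
  by apply/NoDupE; rewrite map_inj_uniq ?uniq_enumF //; apply: MNode_inj.
split; first by move=> T; rewrite InE mem_trees; split => [/eqP|->].
rewrite big_map /Bs; apply: eq_bigr => f _; by rewrite locmax_lm.
Qed.

Lemma z1_Bs c : is_z1 c -> forall n, c n = Bs n.
Proof.
move=> Hc n; have [s [Hs [Hin ->]]] := Hc n.
transitivity (\sum_(T <- map MNode (enumF n n)) ('X^(locmax T) : PR)); last first.
  by rewrite big_map /Bs; apply: eq_bigr => f _; rewrite locmax_lm.
apply: perm_big; apply: uniq_perm.
- by apply/NoDupE.
- by rewrite map_inj_uniq ?uniq_enumF //; apply: MNode_inj.
by move=> T; rewrite mem_trees; apply/idP/eqP => [/InE/Hin // | /Hin/InE].
Qed.

Lemma vanish_Bs N : vanish N (Qg ((1 - 2 * 'X)%:P) (trunc N Bs)).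
Proof.
apply: (@vanish_quartic _ N As Bs Ds 'X Bs0 Ds0 As_eq BsS DsS).
Qed.

Lemma z1_eq_Bs : z1_equation Bs.
Proof.
move=> n; rewrite (agree_eq Bs (N := n)) //; exact: vanish_Bs.
Qed.

Lemma Qg_diff (X c P P' : {poly PR}) :
  3 * (X ^+ 2 * P ^+ 4) - 4 * (X * P ^+ 3) + (1 + 2 * (X * c)) * P ^+ 2 - 1 -
  (3 * (X ^+ 2 * P' ^+ 4) - 4 * (X * P' ^+ 3) + (1 + 2 * (X * c)) * P' ^+ 2 - 1) =
  (P - P') * (X * (3 * X * (P ^+ 3 + P ^+ 2 * P' + P * P' ^+ 2 + P' ^+ 3)
       - 4 * (P ^+ 2 + P * P' + P' ^+ 2) + 2 * c * (P + P')) + (P + P')).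
Proof. ring. Qed.

Lemma two_neq0 : (2 : PR) != 0.
Proof. by rewrite -polyC_natr polyC_eq0. Qed.

Lemma two_neq0' : (1 + 1 : PR) != 0.
Proof. by rewrite -mulr2n; exact: two_neq0. Qed.

Lemma unique_sol (c0 : {poly PR}) (d e : series) : d 0%N = 1 -> e 0%N = 1 ->
  (forall N, vanish N (Qg c0 (trunc N d))) -> (forall N, vanish N (Qg c0 (trunc N e))) ->
  forall n, d n = e n.
Proof.
move=> d0 e0 Hd He n; elim: n {-2}n (leqnn n) => [|n IH] m Hm.
  by move: Hm; rewrite leqn0 => /eqP->; rewrite d0 e0.
case: (ltngtP m n.+1) Hm => // [Hlt _|-> _]; first by apply: IH.
set P := trunc n.+1 d; set P' := trunc n.+1 e.
have := congr1 (fun p : {poly PR} => p`_n.+1) (Qg_diff 'X c0 P P').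
rewrite /= -/(Qg c0 P) -/(Qg c0 P').
rewrite coefB Hd // He // subrr coefM big_ord_recr /= big1; last first.
  move=> [i Hi] _ /=; rewrite coefB !coef_trunc ?IH ?subrr ?mul0r // ltnW //.
rewrite add0r subnn /P /P' coefB.
rewrite (@coef_trunc _ n.+1 d n.+1) // (@coef_trunc _ n.+1 e n.+1) // coefD coefXM /= add0r coefD.
rewrite (@coef_trunc _ n.+1 d 0) // (@coef_trunc _ n.+1 e 0) // d0 e0.
move/esym/eqP; rewrite mulf_eq0 (negbTE two_neq0') orbF subr_eq0.
by move/eqP.
Qed.

Definition bev (x0 : int) (n : nat) : int := (Bs n).[x0].

Lemma eval_quartic (x0 : int) N : vanish N (Qg ((1 - 2 * x0)%:P) (trunc N (bev x0))).
Proof.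
apply: (@vanish_quartic _ N (fun n => (As n).[x0]) (bev x0) (fun n => (Ds n).[x0]) x0).
- by rewrite /bev Bs0 hornerE.
- by rewrite Ds0 hornerE.
- by move=> n; rewrite /bev As_eq !hornerE.
- by move=> n; rewrite /bev BsS horner_sum; apply: eq_bigr => k _; rewrite !hornerE.
- by move=> n; rewrite DsS horner_sum; apply: eq_bigr => k _; rewrite !hornerE.
Qed.

Lemma vanish_cancel (R : idomainType) N (F G : {poly R}) :
  vanish N (F * G) -> G`_0 != 0 -> vanish N F.
Proof.
move=> H G0 n; elim/ltn_ind: n => n IH Hn.
have /eqP := H n Hn; rewrite coefM big_ord_recr /= big1 ?add0r; last first.
  move=> [i Hi] _ /=; rewrite IH ?mul0r //; apply: leq_trans Hn; exact: ltnW.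
by rewrite subnn mulf_eq0 (negbTE G0) orbF => /eqP.
Qed.

Lemma Qg_factor0 (z : {poly int}) :
  Qg ((1 - 2 * 0)%:P) z = (('X * z ^+ 2) *+ 1 - z + 1) * (('X * z ^+ 2) *+ 3 - z - 1).
Proof. rewrite /Qg mulr0 subr0 polyC1; ring. Qed.

Lemma Qg_factor1 (z : {poly int}) :
  Qg ((1 - 2 * 1)%:P) z = (('X * z ^+ 2) *+ 3 - z + 1) * (('X * z ^+ 2) *+ 1 - z - 1).
Proof. rewrite /Qg mulr1 polyCB polyC1 polyC_natr; ring. Qed.

Lemma conv_rec (b : nat -> int) (k : nat) (x0 : int) :
  b 0%N = 1 -> (forall N, vanish N (Qg ((1 - 2 * x0)%:P) (trunc N b))) ->
  (x0 = 0 /\ k = 1%N) \/ (x0 = 1 /\ k = 3%N) ->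
  forall n, b n.+1 = (\sum_(i < n.+1) b i * b (n - i)%N) *+ k.
Proof.
move=> b0 HQ Hk n.
have HF : vanish n.+1 (('X * trunc n.+1 b ^+ 2) *+ k - trunc n.+1 b + 1).
  case: Hk HQ => -[-> ->] HQ.
  - apply: (@vanish_cancel _ _ _ (('X * trunc n.+1 b ^+ 2) *+ 3 - trunc n.+1 b - 1)).
      by rewrite -Qg_factor0; apply: HQ.
    by rewrite !coefB coefMn coefXM coef_trunc // b0 coef1 /=.
  - apply: (@vanish_cancel _ _ _ (('X * trunc n.+1 b ^+ 2) *+ 1 - trunc n.+1 b - 1)).
      by rewrite -Qg_factor1; apply: HQ.
    by rewrite !coefB coefMn coefXM coef_trunc // b0 coef1 /=.
have /eqP := HF n.+1 (leqnn _).
rewrite coefD coefB coefMn coefXM /= coef1 /= addr0 expr2 coefM.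
rewrite subr_eq0 (@coef_trunc _ n.+1 b n.+1) // => /eqP <-.
congr (_ *+ _); apply: eq_bigr => [[i Hi]] _ /=.
rewrite (@coef_trunc _ n.+1 b i) ?(@coef_trunc _ n.+1 b (n - i)) //.
  by apply: leq_trans (leq_subr _ _) _.
by apply: leq_trans (ltnW Hi) _.
Qed.

Lemma cat_div n : 'C(n.*2, n) = (catalan n * n.+1)%N.
Proof.
have h := mul_bin_left n.*2 n.
have e : (n.*2 - n = n)%N by rewrite -addnn addnK.
rewrite e in h.
have hle : ('C(n.*2, n.+1) <= 'C(n.*2, n))%N by nia.
have hc : 'C(n.*2, n) = (('C(n.*2, n) - 'C(n.*2, n.+1)) * n.+1)%N by nia.
by rewrite /catalan {2}hc mulnK.
Qed.

Lemma cat_rec n : (n.+2 * catalan n.+1 = (4 * n + 2) * catalan n)%N.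
Proof.
have h1 := cat_div n.+1.
have h0 := cat_div n.
have h2 := mul_bin_diag (n.+1.*2) n.
have h3 := mul_bin_diag (n.*2.+1) n.
have h4 : 'C(n.*2.+1, n) = 'C(n.*2.+1, n.+1).
  rewrite -bin_sub; last by rewrite -addnn; lia.
  by congr 'C(_, _); rewrite -addnn; lia.
rewrite doubleS /= in h2 h1.
rewrite h4 in h2.
have : (n.+1 * 'C(n.*2.+2, n.+1) = n.+1 * ((4 * n + 2) * catalan n))%N.
  rewrite -h2; rewrite /= h0 in h3.
  move: h3; set C := 'C(n.*2.+1, n.+1); rewrite -addnn => h3; nia.
move/eqP; rewrite eqn_mul2l /= => /eqP <-.
by rewrite h1 mulnC.
Qed.

Lemma deriv_id (W D E E' X : {poly int}) (k : nat) :
  E = W - X - (W ^+ 2) *+ k -> E' = D - 1 - (W * D) *+ (2 * k) ->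
  D * (1 - X *+ (4 * k)) - (1 - W *+ (2 * k)) =
  E' * (1 - W *+ (2 * k)) + E * (D *+ (4 * k)).
Proof. move=> -> ->; rewrite !mulrnA; ring. Qed.

Lemma aux_int (x y z : int) : x - (y + z) = - z -> x = y.
Proof. move=> h; have := congr1 (fun t => t + (y + z)) h; rewrite subrK => ->; ring. Qed.

Lemma aux2 (x y z : int) : x - (y + z) - (0 - z) = 0 -> x = y.
Proof.
move=> h; have : x - y = x - (y + z) - (0 - z) by ring.
by rewrite h => /eqP; rewrite subr_eq0 => /eqP.
Qed.

Lemma conv_lin (u : nat -> int) (k : nat) : u 0%N = 1 ->
  (forall n, u n.+1 = (\sum_(i < n.+1) u i * u (n - i)%N) *+ k) ->
  forall n, u n.+1 *+ n.+2 = u n *+ (k * (4 * n + 2)).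
Proof.
move=> u0 Hu n.
set M := n.+1.
set T := trunc M u.
set W := 'X * T.
set E := W - 'X - (W ^+ 2) *+ k.
set D := W^`().
have vF : vanish M (T - 1 - ('X * T ^+ 2) *+ k).
  move=> [|j] Hj; rewrite !coefB coefMn coefXM coef1 /=.
    by rewrite /T (@coef_trunc _ M u 0) // u0 mul0rn subr0 subrr.
  rewrite /T (@coef_trunc _ M u j.+1) // Hu subr0 expr2 coefM; apply/eqP; rewrite subr_eq0; apply/eqP.
  congr (_ *+ _); apply: eq_bigr => [[i Hi]] _ /=.
  rewrite (@coef_trunc _ M u i) ?(@coef_trunc _ M u (j - i)) //.
    by apply: leq_trans (leq_subr _ _) (ltnW Hj).
  by apply: leq_trans (ltnW Hj); rewrite -ltnS.
have vE : vanish M.+1 E.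
  have -> : E = 'X * (T - 1 - ('X * T ^+ 2) *+ k) by rewrite /E /W; ring.
  move=> [|j] Hj; rewrite coefXM //=; exact: vF.
have hE' : E^`() = D - 1 - (W * D) *+ (2 * k).
  rewrite /E /D derivB derivB derivX derivMn expr2 (derivM W W) [W^`() * W]mulrC.
  by rewrite -mulr2n -mulrnA.
have vR : vanish M (E^`() * (1 - W *+ (2 * k)) + E * (D *+ (4 * k))).
  apply: vanishD; apply: vanishMl; last by move=> j Hj; apply: vE; apply: ltnW.
  by move=> j Hj; rewrite coef_deriv vE ?mul0rn.
have := vR M (leqnn _); rewrite -(deriv_id (E:=E) (X:='X) (D:=D)) //.
rewrite coefB mulrBr mulr1 coefB coefB mulrnAr !coefMn coefMX /=.
rewrite /D /W /T !coef_deriv !coefXM /= /M.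
rewrite (@coef_trunc _ n.+1 u n.+1) // (@coef_trunc _ n.+1 u n) // coef1 /=.
move=> h.
have e : (n.+1 * (4 * k) = k * (4 * n + 2) + 2 * k)%N by nia.
rewrite -mulrnA e mulrnDr in h.
exact: (aux2 h).
Qed.

Lemma conv_cat (u : nat -> int) (k : nat) : u 0%N = 1 ->
  (forall n, u n.+1 = (\sum_(i < n.+1) u i * u (n - i)%N) *+ k) ->
  forall n, u n = (k ^ n * catalan n)%:R.
Proof.
move=> u0 Hu; elim => [|n IH]; first by rewrite u0 expn0 mul1n /catalan /= divn1 bin0.
have h := conv_lin u0 Hu n.
apply/eqP; rewrite -(@eqr_pMn2r _ n.+2) // h IH -!mulrnA eqr_nat.
have hc := cat_rec n.
rewrite expnS.
move: hc; set A := catalan n; set B := catalan n.+1; set K := (k ^ n)%N => hc.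
rewrite -[(k * K * B * n.+2)%N]mulnA [(B * n.+2)%N]mulnC hc; apply/eqP; nia.
Qed.




Theorem mainTheorem8 :
  (exists c : series, is_z1 c) /\
  forall c : series, is_z1 c ->
    [/\ c 0%N = 1, z1_equation c,
        (forall d : series, d 0%N = 1 -> z1_equation d -> d = c),
        (forall n, (c n).[1] = (3 ^ n * catalan n)%:R) &
        (forall n, (c n).[0] = (catalan n)%:R)].
Proof.
split; first by exists Bs; exact: is_z1_Bs.
move=> c Hc.
have -> : c = Bs by apply: functional_extensionality; exact: z1_Bs Hc.
have b1 : forall x0, bev x0 0 = 1 by move=> x0; rewrite /bev Bs0 hornerE.
split.
- exact: Bs0.
- exact: z1_eq_Bs.
- move=> d d0 Hd; apply: functional_extensionality => n.
  apply: (@unique_sol ((1 - 2 * 'X)%:P)) => //; first exact: Bs0.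
    by move=> N m Hm; rewrite -(agree_eq d (N := N)) //; exact: Hd.
  exact: vanish_Bs.
- move=> n; apply: (@conv_cat (bev 1) 3); first exact: b1.
  apply: (@conv_rec _ _ 1); first exact: b1.
    by move=> N; exact: eval_quartic.
  by right.
- move=> n; rewrite -[catalan n]mul1n -(exp1n n).
  apply: (@conv_cat (bev 0) 1); first exact: b1.
  apply: (@conv_rec _ _ 0); first exact: b1.
    by move=> N; exact: eval_quartic.
  by left.
Qed.
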